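(* Let $C\subseteq\{0,1\}^n$ be a linear code with dual distance $\Gamma$ and $|C|\leq 2^{\frac{1}{64}n}$, let $\epsilon<1/8$, let $C'\subseteq C$, and fix a non-adaptive $\epsilon$-tester $(\{Q_i\}_{i\in I},\{\pi_i\}_{i\in I},\mu)$ for $C'$-partial testing of $C$ with query complexity $q$. Let $J\subseteq[n]$ with $|J|\leq n/2$. Then with probability at least $1/9$ over $i\sim\mu$, the query set $Q_i$ is a $J$-discerning set.
   Context: $[n]=\{1,\dots,n\}$; for $x\in\{0,1\}^n$ and $J\subseteq[n]$, $x[J]=(x_j)_{j\in J}$. A linear code is an $\mathbb{F}_2$-subspace of $\{0,1\}^n$; its dual distance is the minimum weight of a nonzero vector of its dual code. Distance is normalized Hamming distance, $d(x,C)=\min_{c\in C}|\{i:x_i\neq c_i\}|/n$. A non-adaptive $\epsilon$-tester for $C'$-partial testing of $C$ with query complexity $q$ consists of query sets $Q_i\subseteq[n]$ of size $q$ ($i\in I$), predicates $\pi_i:\{0,1\}^{Q_i}\to\{0,1\}$, and a probability distribution $\mu$ on $I$, such that for every $x\in C'$, $\Pr_{i\sim\mu}[\pi_i(x[Q_i])=1]\geq 2/3$, and for every $x$ with $d(x,C)>\epsilon$, $\Pr_{i\sim\mu}[\pi_i(x[Q_i])=0]\geq 2/3$. $U(C')$ is the uniform distribution on $C'$, $U(C')[Q]$ the distribution of $X[Q]$ for $X\sim U(C')$, and $U_J(C')$ the distribution obtained by drawing $x\sim U(C')$ and replacing $x[[n]\setminus J]$ by an independent uniformly random vector; $U_J(C')[Q]$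 is its restriction to $Q$. For $J$ with $|J|\leq n/2$, $Q_i$ is $J$-discerning if $d_{TV}(U(C')[Q_i],U_J(C')[Q_i])\geq 1/8$, where $d_{TV}(p,q)=\frac12\sum_a|p(a)-q(a)|$. *)

(* Defs.v *)
From HB Require Import structures.
From mathcomp Require Import all_boot all_order all_algebra.
From mathcomp Require Import boolp reals.
Set Implicit Arguments. Unset Strict Implicit. Unset Printing Implicit Defensive.
Import Order.TTheory GRing.Theory Num.Theory.
Local Open Scope ring_scope.

Definition word (n : nat) := {ffun 'I_n -> bool}.

(* a linear code: an F_2-subspace (contains 0, closed under addition = xor;
   scalar multiplication by 0/1 is then automatic) *)
Definition linear_code (n : nat) (C : {set word n}) : Prop :=
  [ffun => false] \in C /\
  forall x y, x \in C -> y \in C -> [ffun i => x i (+) y i] \in C.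

Definition wt (n : nat) (x : word n) : nat := #|[set i | x i]|.
Definition dotF2 (n : nat) (x y : word n) : bool := odd #|[set i | x i && y i]|.

Definition dual_code (n : nat) (C : {set word n}) : {set word n} :=
  [set y | [forall x in C, ~~ dotF2 x y]].

Definition dual_distance (n : nat) (C : {set word n}) (Gamma : nat) : Prop :=
  (exists2 y, y \in dual_code C & (y != [ffun => false]) /\ wt y = Gamma) /\
  (forall y, y \in dual_code C -> y != [ffun => false] -> (Gamma <= wt y)%N).

Definition hamming (n : nat) (x y : word n) : nat := #|[set i | x i != y i]|.

(* normalized distance d(x,C) = min_{c in C} hamming(x,c) / n
   (the default n of the min is never smaller than an actual hamming distance) *)
Definition dist (R : realType) (n : nat) (x : word n) (C : {set word n}) : R :=
  (\big[minn/n]_(c in C) hamming x c)%:R / n%:R.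

Definition subword (n : nat) (Q : {set 'I_n}) := {ffun {j : 'I_n | j \in Q} -> bool}.
Definition restrict (n : nat) (Q : {set 'I_n}) (x : word n) : subword Q :=
  [ffun j => x (val j)].

Definition U_restr (R : realType) (n : nat) (C' : {set word n}) (Q : {set 'I_n})
  (a : subword Q) : R :=
  #|[set x in C' | restrict Q x == a]|%:R / #|C'|%:R.

Definition merge (n : nat) (J : {set 'I_n}) (x z : word n) : word n :=
  [ffun j => if j \in J then x j else z j].

(* U_J(C')[Q] : x ~ U(C'), z ~ uniform on {0,1}^n independently *)
Definition UJ_restr (R : realType) (n : nat) (C' : {set word n}) (J Q : {set 'I_n})
  (a : subword Q) : R :=
  #|[set xz : word n * word n | (xz.1 \in C') && (restrict Q (merge J xz.1 xz.2) == a)]|%:R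
  / (#|C'| * 2 ^ n)%:R.

Definition dTV (R : realType) (T : finType) (p p' : T -> R) : R :=
  2^-1 * \sum_(a : T) `|p a - p' a|.

Definition discerning (R : realType) (n : nat) (C' : {set word n}) (J Q : {set 'I_n}) : Prop :=
  dTV (@U_restr R n C' Q) (@UJ_restr R n C' J Q) >= 8^-1.

Definition is_distr (R : realType) (I : finType) (mu : I -> R) : Prop :=
  (forall i, 0 <= mu i) /\ \sum_(i : I) mu i = 1.

Definition partial_tester (R : realType) (n : nat) (C C' : {set word n}) (eps : R)
  (q : nat) (I : finType) (Q : I -> {set 'I_n})
  (pi : forall i : I, subword (Q i) -> bool) (mu : I -> R) : Prop :=
  is_distr mu /\
  (forall i, #|Q i| = q) /\
  (forall x, x \in C' -> \sum_(i | pi i (restrict (Q i) x)) mu i >= 2 / 3) /\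
  (forall x : word n, dist R x C > eps ->
     \sum_(i | ~~ pi i (restrict (Q i) x)) mu i >= 2 / 3).

(* Main.v *)
Require Import Defs.
From HB Require Import structures.
From mathcomp Require Import all_boot all_order all_algebra.
From mathcomp Require Import boolp reals zify ring.
Import Order.TTheory GRing.Theory Num.Theory.
Lemma num19 : (2 ^ 19 <= 3 ^ 12)%N.
Proof. rewrite !expnS expn0. lia. Qed.

Lemma numcore m : (20 <= m)%N -> (6^64 * 2^(66 * m) <= 3^(48 * m))%N.
Proof.
move=> hm.
have h2 : (2^(76 * m) <= 3^(48 * m))%N.
  rewrite (_ : 76 * m = 19 * (4 * m))%N; last by lia.
  rewrite (_ : 48 * m = 12 * (4 * m))%N; last by lia.
  rewrite (expnM 2 19) (expnM 3 12) leq_exp2r; [exact: num19 | lia].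
apply: leq_trans h2.
rewrite (_ : 76 * m = 192 + (76 * m - 192))%N; last by lia.
have h1 : (6^64 <= 2^192)%N.
  rewrite (_ : 192 = 3 * 64)%N; last by [].
  by rewrite expnM leq_exp2r.
rewrite expnD; apply: (leq_mul h1); clear h1.
rewrite leq_exp2l; last by []. lia.
Qed.

Lemma final_bound (K Cs m j n : nat) :
  n = (j + m)%N -> (K * 3^(m - n%/8) <= 2^j * 4^m)%N ->
  (Cs^64 <= 2^n)%N -> (2*j <= n)%N -> (64 <= n)%N ->
  (6 * Cs * K <= 2^n)%N.
Proof.
move=> hn hK hC hj h64.
have key : (6 * Cs * 2^m <= 3^(m - n %/ 8))%N.
  rewrite -(@leq_exp2r _ _ 64); last by [].
  rewrite !expnMn.
  apply: (@leq_trans (6^64 * 2^(66 * m))%N).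
    rewrite -mulnA; apply: leq_mul; first exact: leqnn.
    rewrite (_ : 66 * m = 2 * m + 64 * m)%N; last by lia.
    rewrite expnD (mulnC 64 m) (expnM 2 m 64); apply: leq_mul; last exact: leqnn.
    apply: leq_trans hC _; rewrite leq_exp2l; last by []. lia.
  have hm : (20 <= m)%N by lia.
  apply: (leq_trans (numcore m hm)).
  rewrite -expnM leq_exp2l; last by []. lia.
have h3 : (0 < 3^(m - n %/ 8))%N by rewrite expn_gt0.
rewrite -(leq_pmul2r h3) -mulnA.
apply: (@leq_trans (6 * Cs * (2^j * 4^m))%N); first by rewrite leq_mul.
have e4 : 4^m = 2^m * 2^m by rewrite -expnMn.
have en : 2^n = 2^j * 2^m by rewrite hn expnD.
rewrite e4 en; move: key; set t := 3 ^ _; set a := 2^j; set b := 2^m.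
clear -t a b; move=> key.
clearbody t a b.
have -> : 6 * Cs * (a * (b * b)) = a * b * (6 * Cs * b) by ring.
by rewrite leq_mul2l key orbT.
Qed.

Lemma card_sum (T : finType) (P : pred T) : #|[set z | P z]| = \sum_z P z.
Proof.
rewrite -sum1_card big_mkcond; apply: eq_bigr => z _; rewrite inE.
by case: (P z).
Qed.

Lemma sum_prod_word n (f : 'I_n -> bool -> nat) :
  \sum_(z : word n) \prod_(j < n) f j (z j) = \prod_(j < n) (f j true + f j false).
Proof.
transitivity (\prod_(j < n) \sum_(b : bool) f j b); last first.
  by apply: eq_bigr => j _; rewrite big_bool.
by rewrite bigA_distr_bigA.
Qed.

Lemma card_pairs n (P : pred (word n)) (F : word n -> word n -> bool) :
  #|[set xz : word n * word n | P xz.1 && F xz.1 xz.2]| =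
  \sum_(x | P x) #|[set z | F x z]|.
Proof.
rewrite card_sum [RHS]big_mkcond /=.
transitivity (\sum_x \sum_z (P x && F x z : nat)); first by rewrite pair_bigA.
apply: eq_bigr => x _; case: (P x) => /=; first by rewrite card_sum.
by rewrite big1.
Qed.

Lemma card_not n (j0 : 'I_n) : #|[set z : word n | ~~ z j0]| * 2 = 2 ^ n.
Proof.
rewrite card_sum.
transitivity ((\sum_(z : word n) \prod_(j < n) (if j == j0 then (~~ z j : nat) else 1)) * 2).
  congr (_ * _); apply: eq_bigr => z _.
  by rewrite (bigD1 j0) //= eqxx big1 ?muln1 // => j /negbTE ->.
rewrite (@sum_prod_word n (fun j b => if j == j0 then (~~ b : nat) else 1)) (bigD1 j0) //= eqxx /= mul1n.

rewrite (eq_bigr (fun _ => 2)); last by move=> j /negbTE ->.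
rewrite prod_nat_const cardC1 card_ord -expnSr.
by case: n j0 => [[]|].
Qed.

Lemma moment n (J : {set 'I_n}) (x c : word n) :
  #|[set z : word n | 8 * hamming (Defs.merge J x z) c < n]| * 3 ^ (#|~:J| - n %/ 8)
  <= 2 ^ #|J| * 4 ^ #|~:J|.
Proof.
set m := #|~:J|.
pose f := fun (j : 'I_n) (b : bool) => if (j \notin J) && (b == c j) then 3 else 1.
have hsum : \sum_(z : word n) \prod_(j < n) f j (z j) = 2 ^ #|J| * 4 ^ m.
  rewrite sum_prod_word.
  rewrite (eq_bigr (fun j => if j \in J then 2 else 4)); last first.
    by move=> j _; rewrite /f; case: (j \in J); case: (c j).
  rewrite (bigID (fun j => j \in J)) /=.
  rewrite (eq_bigr (fun _ => 2)); last by move=> j ->.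
  under [X in _ * X]eq_bigr => j hj do rewrite (negbTE hj).
  rewrite !prod_nat_const; congr (_ * 4 ^ _).
  by apply: eq_card => j; rewrite !inE.
rewrite -hsum.
apply: (@leq_trans (\sum_(z in [set z : word n | 8 * hamming (Defs.merge J x z) c < n])
                     \prod_(j < n) f j (z j))).
  rewrite -sum_nat_const; apply: leq_sum => z; rewrite inE => hz.
  have -> : \prod_(j < n) f j (z j) = 3 ^ #|[set j | (j \notin J) && (z j == c j)]|.
    rewrite -prod_nat_const [RHS]big_mkcond /=; apply: eq_bigr => j _.
    by rewrite /f inE.
  apply: leq_pexp2l => //.
  set E := [set j | _ && _].
  set D := [set j | (j \notin J) && (z j != c j)].
  have hED : #|E| + #|D| = m.
    rewrite /m -(cardsID [set j | z j == c j] (~:J)); congr (_ + _); apply: eq_card => j; rewrite !inE //.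
    by rewrite andbC.
  have hD : #|D| <= hamming (Defs.merge J x z) c.
    apply: subset_leq_card; apply/subsetP => j; rewrite !inE /Defs.merge ffunE.
    by case/andP=> /negbTE -> .
  have : #|D| <= n %/ 8.
    rewrite leq_divRL //; move: hz hD; clear; lia.
  move: hED; clear; lia.
rewrite [X in _ <= X](bigID (fun z => z \in [set z : word n | 8 * hamming (Defs.merge J x z) c < n])) /=.
exact: leq_addr.
Qed.

Lemma big_minn_ge n (C : {set word n}) (h : word n -> nat) :
  (forall c, c \in C -> n <= 8 * h c) -> n <= 8 * \big[minn/n]_(c in C) h c.
Proof.
move=> H; apply: (big_ind (fun v => n <= 8 * v)) => //.
- by rewrite leq_pmull.
- by move=> a b ha hb; rewrite /minn; case: ifP.
Qed.

From mathcomp Require Import lra.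
Local Open Scope ring_scope.

Lemma dist_lb (R : realType) n (x : word n) (C : {set word n}) :
  (0 < n)%N -> (forall c, c \in C -> (n <= 8 * hamming x c)%N) -> 8^-1 <= dist R x C.
Proof.
move=> n0 H; have hb := @big_minn_ge n C _ H.
rewrite /dist ler_pdivlMr ?ltr0n //.
move: hb; rewrite -(ler_nat R) natrM.
set b := (\big[minn/n]_(c in C) hamming x c)%:R.
move=> hb; lra.
Qed.

Lemma sum_restr (R : realType) (T U : finType) (P : pred T) (r : T -> U) (w : U -> R) :
  \sum_(a : U) w a * #|[set t | P t && (r t == a)]|%:R = \sum_(t | P t) w (r t).
Proof.
transitivity (\sum_(a : U) \sum_(t : T) w a * (P t && (r t == a) : nat)%:R).
  apply: eq_bigr => a _; rewrite card_sum natr_sum mulr_sumr //.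
rewrite exchange_big [RHS]big_mkcond /=; apply: eq_bigr => t _.
case: (P t) => /=; last by rewrite big1 // => a _; rewrite mulr0.
rewrite (bigD1 (r t)) //= eqxx mulr1 big1 ?addr0 // => a ha.
by rewrite eq_sym (negbTE ha) mulr0.
Qed.

Lemma dTV_ge (R : realType) (T : finType) (p p' : T -> R) (w : T -> bool) :
  \sum_a p a = \sum_a p' a ->
  \sum_a (w a)%:R * (p a - p' a) <= dTV p p'.
Proof.
move=> hs; rewrite /dTV.
set s1 := \sum_a (w a)%:R * (p a - p' a).
set s2 := \sum_a (~~ w a)%:R * (p a - p' a).
have h0 : s1 + s2 = 0.
  rewrite /s1 /s2 -big_split /=.
  rewrite (eq_bigr (fun a => p a - p' a)); last by move=> a _; case: (w a) => /=; rewrite ?mul1r ?mul0r ?addr0 ?add0r.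
  by rewrite sumrB hs subrr.
have h1 : s1 - s2 <= \sum_a `|p a - p' a|.
  rewrite /s1 /s2 -sumrB; apply: ler_sum => a _.
  case: (w a) => /=; rewrite ?mul1r ?mul0r ?subr0 ?sub0r; first exact: ler_norm.
  by rewrite -normrN ler_norm.
lra.
Qed.

Lemma card_word n : #|{: word n}| = (2 ^ n)%N.
Proof. by rewrite card_ffun card_bool card_ord. Qed.

Lemma card_exists n (C : {set word n}) (F : word n -> word n -> bool) (S : pred (word n)) :
  (forall z, S z -> exists2 c, c \in C & F c z) ->
  (#|[set z | S z]| <= \sum_(c in C) #|[set z | F c z]|)%N.
Proof.
move=> H; rewrite card_sum.
under [X in (_ <= X)%N]eq_bigr => c _ do rewrite card_sum.
rewrite exchange_big /=; apply: leq_sum => z _.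
case hS: (S z) => //=; have [c hc hF] := H z hS.
by rewrite (bigD1 c) //= hF.
Qed.

Lemma bad_count (R : realType) n (C C' : {set word n}) (eps : R) (J : {set 'I_n}) :
  (0 < n)%N -> (0 < #|C|)%N -> (#|C| ^ 64 <= 2 ^ n)%N -> (64 <= n)%N -> eps < 8^-1 ->
  (2 * #|J| <= n)%N ->
  (#|[set xz : word n * word n | (xz.1 \in C') &&
        ~~ (eps < dist R (Defs.merge J xz.1 xz.2) C)%R]| * 6 <= #|C'| * 2 ^ n)%N.
Proof.
move=> n0 hCpos hC h64 heps hJ.
rewrite (@card_pairs n (fun x => x \in C') (fun x z => ~~ (eps < dist R (Defs.merge J x z) C))).
rewrite big_distrl /= -sum_nat_const; apply: leq_sum => x _.
apply: (@leq_trans ((\sum_(c in C) #|[set z | 8 * hamming (Defs.merge J x z) c < n]|) * 6)%N).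
  rewrite leq_mul2r /=; apply: card_exists => z hz.
  case: (pickP [pred c | (c \in C) && (8 * hamming (Defs.merge J x z) c < n)%N]) => [c /andP[hc hF]|hall]; first by exists c.
  exfalso.
  have := @dist_lb R n (Defs.merge J x z) C n0.
  have hall' : forall c, c \in C -> (n <= 8 * hamming (Defs.merge J x z) c)%N.
    by move=> c hc; rewrite leqNgt; have := hall c; rewrite /= hc => /negbT.
  move=> /(_ hall') hd; move: hz; rewrite -leNgt => hz.
  have : (8^-1 : R) < 8^-1 by apply: le_lt_trans heps; apply: le_trans hz.
  by rewrite ltxx.
rewrite -(leq_pmul2l hCpos) big_distrl /= big_distrr /= -sum_nat_const.
apply: leq_sum => c _.
rewrite [X in (X <= _)%N](_ : _ = 6 * #|C| * #|[set z | 8 * hamming (Defs.merge J x z) c < n]|)%N; last by ring.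
have hn : n = (#|J| + #|~: J|)%N by rewrite cardsC card_ord.
exact: (@final_bound _ _ _ _ _ hn (moment n J x c) hC hJ h64).
Qed.

Lemma sumU (R : realType) n (C' : {set word n}) (Q : {set 'I_n}) (w : subword Q -> R) :
  \sum_a w a * @U_restr R n C' Q a = (\sum_(x in C') w (restrict Q x)) / #|C'|%:R.
Proof.
rewrite /U_restr; under eq_bigr do rewrite mulrA; rewrite -mulr_suml; congr (_ / _).
exact: (@sum_restr R _ _ (fun x => x \in C') (restrict Q) w).
Qed.

Lemma sumUJ (R : realType) n (C' : {set word n}) (J Q : {set 'I_n}) (w : subword Q -> R) :
  \sum_a w a * @UJ_restr R n C' J Q a =
  (\sum_(xz | xz.1 \in C') w (restrict Q (Defs.merge J xz.1 xz.2))) / (#|C'| * 2 ^ n)%:R.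
Proof.
rewrite /UJ_restr; under eq_bigr do rewrite mulrA; rewrite -mulr_suml; congr (_ / _).
exact: (@sum_restr R _ _ (fun xz : word n * word n => xz.1 \in C')
          (fun xz => restrict Q (Defs.merge J xz.1 xz.2)) w).
Qed.

Lemma count_pairs (R : realType) n (C' : {set word n}) :
  \sum_(xz : word n * word n | xz.1 \in C') (1 : R) = (#|C'| * 2 ^ n)%:R.
Proof.
have h := @card_pairs n (fun x => x \in C') (fun _ _ => true).
have e : (\sum_(x | x \in C') #|[set z : word n | true]| = #|C'| * 2 ^ n)%N.
  rewrite -sum_nat_const; apply: eq_bigr => x _.
  by rewrite -card_word; apply: eq_card => z; rewrite inE.
rewrite -e -h.
rewrite card_sum natr_sum [LHS]big_mkcond /=; apply: eq_bigr => xz _.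
by rewrite andbT; case: (xz.1 \in C').
Qed.

Lemma general_case (R : realType) n (C : {set word n}) (eps : R) (C' : {set word n})
  (q : nat) (I : finType) (Q : I -> {set 'I_n})
  (pi : forall i : I, subword (Q i) -> bool) (mu : I -> R) (J : {set 'I_n}) :
  (0 < n)%N -> (0 < #|C|)%N -> (#|C| ^ 64 <= 2 ^ n)%N -> (64 <= n)%N -> eps < 8^-1 ->
  (0 < #|C'|)%N -> @partial_tester R n C C' eps q I Q pi mu -> (2 * #|J| <= n)%N ->
  9^-1 <= \sum_(i | `[< @discerning R n C' J (Q i) >]) mu i.
Proof.
move=> n0 hC0 hC h64 heps hN [[mu0 mu1] [_ [hacc hrej]]] hJ.
set N := #|C'|. set W := (N * 2^n)%N.
have Npos : 0 < (N%:R : R) by rewrite ltr0n.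
have Wpos : 0 < (W%:R : R) by rewrite ltr0n muln_gt0 hN expn_gt0.
pose a i := (\sum_(x in C') ((pi i (restrict (Q i) x))%:R : R)) / (N%:R : R).
pose b i := (\sum_(xz | xz.1 \in C')
     ((pi i (restrict (Q i) (Defs.merge J xz.1 xz.2)))%:R : R)) / (W%:R : R).
have hab : forall i, a i - b i <= dTV (@U_restr R n C' (Q i)) (@UJ_restr R n C' J (Q i)).
  move=> i.
  have -> : a i - b i = \sum_s ((pi i s)%:R : R) *
        (@U_restr R n C' (Q i) s - @UJ_restr R n C' J (Q i) s).
    under eq_bigr do rewrite mulrBr.
    by rewrite sumrB sumU sumUJ.
  apply: dTV_ge.
  transitivity (1 : R).
    transitivity (\sum_s (1 : R) * @U_restr R n C' (Q i) s).
      by apply: eq_bigr => s _; rewrite mul1r.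
    by rewrite sumU sumr_const -/N divff // gt_eqF.
  transitivity (\sum_s (1 : R) * @UJ_restr R n C' J (Q i) s); last first.
    by apply: eq_bigr => s _; rewrite mul1r.
  by rewrite sumUJ count_pairs divff // gt_eqF.
have ha1 : forall i, a i <= 1.
  move=> i; rewrite /a ler_pdivrMr // mul1r.
  rewrite -natr_sum ler_nat /N -sum1_card; apply: leq_sum => x _.
  exact: leq_b1.
have hb0 : forall i, 0 <= b i.
  move=> i; rewrite /b divr_ge0 ?ler0n //; apply: sumr_ge0 => xz _; exact: ler0n.
have hnd : forall i, ~~ `[< @discerning R n C' J (Q i) >] ->
    dTV (@U_restr R n C' (Q i)) (@UJ_restr R n C' J (Q i)) < 8^-1.
  move=> i /asboolPn h; rewrite ltNge; apply/negP => h'; apply: h; exact: h'.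
have inner : forall x : word n,
    \sum_i mu i * ((pi i (restrict (Q i) x))%:R : R) =
    \sum_(i | pi i (restrict (Q i) x)) mu i.
  move=> x; rewrite [RHS]big_mkcond; apply: eq_bigr => i _.
  by case: (pi i _); rewrite ?mulr1 ?mulr0.
have hA : 2 / 3 <= \sum_i mu i * a i.
  have -> : \sum_i mu i * a i =
      (\sum_(x in C') \sum_i mu i * ((pi i (restrict (Q i) x))%:R : R)) / N%:R.
    rewrite exchange_big mulr_suml; apply: eq_bigr => i _.
    by rewrite /a mulrA mulr_sumr.
  rewrite ler_pdivlMr //.
  apply: (@le_trans _ _ (\sum_(x in C') (2 / 3 : R))).
    by rewrite sumr_const -/N mulr_natr.
  apply: ler_sum => x hx; rewrite inner; exact: hacc.
have hB : \sum_i mu i * b i <= 4 / 9.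
  pose bad := fun xz : word n * word n => ~~ (eps < dist R (Defs.merge J xz.1 xz.2) C).
  have -> : \sum_i mu i * b i =
      (\sum_(xz | xz.1 \in C') \sum_i mu i *
          ((pi i (restrict (Q i) (Defs.merge J xz.1 xz.2)))%:R : R)) / W%:R.
    rewrite exchange_big mulr_suml; apply: eq_bigr => i _.
    by rewrite /b mulrA mulr_sumr.
  have per : forall xz : word n * word n, xz.1 \in C' ->
      \sum_i mu i * ((pi i (restrict (Q i) (Defs.merge J xz.1 xz.2)))%:R : R)
      <= 3^-1 + 2 / 3 * ((bad xz : nat)%:R).
    move=> xz hx; rewrite inner.
    have hsp : \sum_i mu i = \sum_(i | pi i (restrict (Q i) (Defs.merge J xz.1 xz.2))) mu i
        + \sum_(i | ~~ pi i (restrict (Q i) (Defs.merge J xz.1 xz.2))) mu i.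
      by rewrite (bigID (fun i => pi i (restrict (Q i) (Defs.merge J xz.1 xz.2)))).
    rewrite mu1 in hsp.
    case hb: (bad xz) => /=.
      have : 0 <= \sum_(i | ~~ pi i (restrict (Q i) (Defs.merge J xz.1 xz.2))) mu i.
        by apply: sumr_ge0 => i _.
      lra.
    have : 2 / 3 <= \sum_(i | ~~ pi i (restrict (Q i) (Defs.merge J xz.1 xz.2))) mu i.
      by apply: hrej; move: hb; rewrite /bad => /negbFE.
    lra.
  rewrite ler_pdivrMr //.
  apply: (le_trans (ler_sum _ per)).
  have e1 : \sum_(xz : word n * word n | xz.1 \in C') (3^-1 : R) = 3^-1 * W%:R.
    by rewrite /W -count_pairs mulr_sumr; apply: eq_bigr => xz _; rewrite mulr1.
  rewrite big_split /= e1 -mulr_sumr.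
  have hcnt : \sum_(xz : word n * word n | xz.1 \in C') ((bad xz : nat)%:R : R)
      = (#|[set xz : word n * word n | (xz.1 \in C') && bad xz]|)%:R.
    rewrite card_sum natr_sum [LHS]big_mkcond /=; apply: eq_bigr => xz _.
    by case: (xz.1 \in C').
  rewrite hcnt.
  have hbc := @bad_count R n C C' eps J n0 hC0 hC h64 heps hJ.
  move: hbc; rewrite -/N -/W -(ler_nat R) natrM.
  set B := (#|_|)%:R; move=> hbc.
  lra.
pose P := fun i => `[< @discerning R n C' J (Q i) >].
have hsplit : \sum_i mu i = \sum_(i | P i) mu i + \sum_(i | ~~ P i) mu i.
  by rewrite (bigID P).
rewrite mu1 in hsplit.
have hD : \sum_i mu i * (a i - b i) <=
    \sum_(i | P i) mu i + (\sum_(i | ~~ P i) mu i) * 8^-1.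
  rewrite (bigID P) /=; apply: lerD.
    apply: ler_sum => i _; rewrite -[X in _ <= X]mulr1; apply: ler_wpM2l => //.
    by have := ha1 i; have := hb0 i; lra.
  rewrite mulr_suml; apply: ler_sum => i hi; apply: ler_wpM2l => //.
  by have := hab i; have := hnd i hi; lra.
have hdiff : \sum_i mu i * (a i - b i) = \sum_i mu i * a i - \sum_i mu i * b i.
  by rewrite -sumrB; apply: eq_bigr => i _; rewrite mulrBr.
rewrite -/P; lra.
Qed.

Lemma small_disc (R : realType) n (C' : {set word n}) (J Q : {set 'I_n}) :
  (forall x, x \in C' -> x = [ffun => false]) -> [ffun => false] \in C' ->
  ~~ (Q \subset J) -> @discerning R n C' J Q.
Proof.
move=> hC'z hz0 /subsetPn [j0 hj0Q hj0J].
set z0 : word n := [ffun => false].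
have hN : #|C'| = 1%N.
  rewrite -(cards1 z0); apply: eq_card => x; rewrite inE.
  apply/idP/eqP => [hx|->]; [exact: hC'z | exact: hz0].
set a0 := restrict Q z0.
have hU : @U_restr R n C' Q a0 = 1.
  rewrite /U_restr hN.
  have -> : [set x in C' | restrict Q x == a0] = C'.
    apply/setP => x; rewrite inE; case hx: (x \in C') => //=.
    by rewrite (hC'z x hx) eqxx.
  by rewrite hN divr1.
have hUJ : @UJ_restr R n C' J Q a0 <= 2^-1.
  rewrite /UJ_restr hN mul1n.
  set S := [set xz : word n * word n | _ && _].
  have hS : (#|S| * 2 <= 2 ^ n)%N.
    apply: (@leq_trans (#|[set xz : word n * word n | (xz.1 \in C') && ~~ xz.2 j0]| * 2)).
      rewrite leq_mul2r /=; apply: subset_leq_card; apply/subsetP => xz.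
      rewrite !inE => /andP[-> /eqP h] /=.
      have := congr1 (fun f : subword Q => f (exist _ j0 hj0Q)) h.
      by rewrite !ffunE /= (negbTE hj0J) => ->.
    rewrite (@card_pairs n (fun x => x \in C') (fun _ z => ~~ z j0)) sum_nat_const hN mul1n.
    by rewrite card_not.
  have h2 : (0 : R) < (2 ^ n)%:R by rewrite ltr0n expn_gt0.
  rewrite ler_pdivrMr // -(ler_pM2r (_ : (0 : R) < 2)) //.
  move: hS; rewrite -(ler_nat R) natrM => hS.
  set c := (#|S|)%:R in hS *; set w := ((2 ^ n)%:R : R) in hS h2 *.
  lra.
rewrite /discerning /dTV.
have hsum : `|@U_restr R n C' Q a0 - @UJ_restr R n C' J Q a0| <=
    \sum_a `|@U_restr R n C' Q a - @UJ_restr R n C' J Q a|.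
  rewrite (bigD1 a0) //= lerDl; apply: sumr_ge0 => a _; exact: normr_ge0.
move: hsum; rewrite hU.
have hUJ0 : 0 <= @UJ_restr R n C' J Q a0.
  by rewrite /UJ_restr divr_ge0 ?ler0n.
rewrite ger0_norm; last by lra.
set T := \sum_a _; move=> hT; lra.
Qed.

Lemma small_case (R : realType) n (C : {set word n}) (eps : R) (C' : {set word n})
  (q : nat) (I : finType) (Q : I -> {set 'I_n})
  (pi : forall i : I, subword (Q i) -> bool) (mu : I -> R) (J : {set 'I_n}) :
  (0 < n)%N -> (forall c, c \in C -> c = [ffun => false]) -> eps < 8^-1 ->
  C' \subset C -> C' != set0 -> @partial_tester R n C C' eps q I Q pi mu ->
  (2 * #|J| <= n)%N ->
  9^-1 <= \sum_(i | `[< @discerning R n C' J (Q i) >]) mu i.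
Proof.
move=> n0 hCz heps hsub hne [[mu0 mu1] [_ [hacc hrej]]] hJ.
set z0 : word n := [ffun => false].
have hC'z : forall x, x \in C' -> x = z0.
  by move=> x hx; apply: hCz; exact: (subsetP hsub).
have hz0 : z0 \in C'.
  by case/set0Pn: hne => x hx; rewrite -(hC'z x hx).
set x1 : word n := [ffun j => j \notin J].
have hx1 : eps < dist R x1 C.
  apply: (lt_le_trans heps); apply: dist_lb => // c hc; rewrite (hCz c hc).
  have -> : hamming x1 [ffun => false] = #|~: J|.
    by apply: eq_card => j; rewrite !inE /x1 !ffunE; case: (j \in J).
  have := cardsC J; rewrite card_ord; lia.
have hA := hacc z0 hz0.
have hB := hrej x1 hx1.
pose P := fun i => `[< @discerning R n C' J (Q i) >].
pose ac := fun i => pi i (restrict (Q i) z0).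
pose rj := fun i => ~~ pi i (restrict (Q i) x1).
have per : forall i, mu i * (ac i)%:R + mu i * (rj i)%:R <= mu i + mu i * (P i : bool)%:R.
  move=> i; case hP: (P i); first by
    rewrite mulr1 lerD // -[X in _ <= X]mulr1 ler_wpM2l // lern1 leq_b1.
  have hsub' : Q i \subset J.
    apply/negPn/negP => hn; move/negbT: hP; rewrite /P => /negP; apply.
    by apply/asboolP; apply: small_disc.
  rewrite /ac /rj.
  have -> : restrict (Q i) x1 = restrict (Q i) z0.
    apply/ffunP => j; rewrite /restrict /x1 /z0 !ffunE.
    by rewrite (subsetP hsub' _ (valP j)).
  by case: (pi i _); rewrite /= ?mulr1 ?mulr0 ?addr0 ?add0r.
have hsum : \sum_i (mu i * (ac i)%:R + mu i * (rj i)%:R) <=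
    \sum_i (mu i + mu i * (P i : bool)%:R).
  by apply: ler_sum => i _; exact: per i.
rewrite !big_split /= mu1 in hsum.
have e1 : \sum_i mu i * (ac i)%:R = \sum_(i | ac i) mu i.
  rewrite [RHS]big_mkcond; apply: eq_bigr => i _; by case: (ac i); rewrite ?mulr1 ?mulr0.
have e2 : \sum_i mu i * (rj i)%:R = \sum_(i | rj i) mu i.
  rewrite [RHS]big_mkcond; apply: eq_bigr => i _; by case: (rj i); rewrite ?mulr1 ?mulr0.
have e3 : \sum_i mu i * (P i : bool)%:R = \sum_(i | P i) mu i.
  rewrite [RHS]big_mkcond; apply: eq_bigr => i _; by case: (P i); rewrite ?mulr1 ?mulr0.
rewrite e1 e2 e3 in hsum.
rewrite -/P; move: hA hB hsum; rewrite -/ac -/rj; lra.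
Qed.

Theorem lemma8 (R : realType) (n : nat) (C : {set word n}) (Gamma : nat)
  (eps : R) (C' : {set word n}) (q : nat) (I : finType) (Q : I -> {set 'I_n})
  (pi : forall i : I, subword (Q i) -> bool) (mu : I -> R) (J : {set 'I_n}) :
  linear_code C ->
  dual_distance C Gamma ->
  (#|C| ^ 64 <= 2 ^ n)%N ->
  eps < 8^-1 ->
  C' \subset C ->
  C' != set0 ->
  @partial_tester R n C C' eps q I Q pi mu ->
  (2 * #|J| <= n)%N ->
  \sum_(i | `[< @discerning R n C' J (Q i) >]) mu i >= 9^-1.
Proof.
move=> [hz0 _] [[y _ [hy _]] _] hC heps hsub hne ht hJ.
have n0 : (0 < n)%N.
  case: (posnP n) => [n0|//]; exfalso; case/negP: hy.
  apply/eqP/ffunP => j; have := ltn_ord j; rewrite [X in (_ < X)%N -> _]n0.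
  by [].
have hCpos : (0 < #|C|)%N by apply/card_gt0P; exists [ffun => false].
case: (leqP 64 n) => h64.
  apply: (@general_case R n C eps C' q I Q pi mu J n0 hCpos hC h64 heps _ ht hJ).
  by rewrite card_gt0.
apply: (@small_case R n C eps C' q I Q pi mu J n0 _ heps hsub hne ht hJ).
move=> c hc; apply/eqP; apply/negPn/negP => hcz.
have h2 : (2 <= #|C|)%N.
  have : [set c; [ffun => false]] \subset C.
    by apply/subsetP => x; rewrite !inE => /orP[] /eqP ->.
  by move/subset_leq_card; rewrite cards2 hcz.
have : (2 ^ 64 <= 2 ^ n)%N.
  apply: leq_trans hC; rewrite leq_exp2r //.
by rewrite leq_exp2l //; lia.
Qed.
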